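(* There is an absolute constant $c>0$ such that for every $n\ge2$, every $0<\rho\le1/3$ and every $0<\varepsilon\le\rho^{2n}$, the maximum over all $n$-agent symmetric averaging systems with parameter $\rho$ of the communication count $\mathcal{C}_\varepsilon$ is at least $$\Bigl(\frac{c}{\rho n}\log\frac1\varepsilon\Bigr)^{n-1}.$$
   Context: A (symmetric) averaging system with parameter $\rho\in(0,1/2]$ on $n$ agents consists of an infinite sequence of undirected graphs $(g_t)_{t\ge1}$ on $\{1,\dots,n\}$, each with a self-loop at every vertex, together with positions $x_i(t)\in[0,1]$ obeying: for each $t$ and vertex $i$, with $L_i(t)=\min\{x_j(t): \{i,j\}\in g_t\}$, $R_i(t)=\max\{x_j(t): \{i,j\}\in g_t\}$ and $\delta_i(t)=\rho(R_i(t)-L_i(t))$, the new position satisfies $L_i(t)+\delta_i(t)\le x_i(t+1)\le R_i(t)-\delta_i(t)$. The communication count $\mathcal{C}_\varepsilon$ of such a system is the number of time steps $t$ at which $g_t$ has an edge $\{i,j\}$ with $|x_i(t)-x_j(t)|\ge\varepsilon$. Logarithms are base 2. *)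

(* Defs.v *)
From Stdlib Require Import Reals Lra Lia List.
Open Scope R_scope.

(* Agents are 0..n-1; time steps are indexed by t : nat (starting at 0).
   g t i j : {i,j} is an edge of the graph g_t. x t i : position of agent i at time t. *)

Definition log2 (y : R) : R := ln y / ln 2.

Definition is_nbr_min (n : nat) (g : nat -> nat -> nat -> Prop) (x : nat -> nat -> R)
  (t i : nat) (L : R) : Prop :=
  (exists j, (j < n)%nat /\ g t i j /\ x t j = L) /\
  (forall j, (j < n)%nat -> g t i j -> L <= x t j).

Definition is_nbr_max (n : nat) (g : nat -> nat -> nat -> Prop) (x : nat -> nat -> R)
  (t i : nat) (R' : R) : Prop :=
  (exists j, (j < n)%nat /\ g t i j /\ x t j = R') /\
  (forall j, (j < n)%nat -> g t i j -> x t j <= R').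

Definition averaging_system (n : nat) (rho : R)
  (g : nat -> nat -> nat -> Prop) (x : nat -> nat -> R) : Prop :=
  (forall t i, (i < n)%nat -> g t i i) /\
  (forall t i j, (i < n)%nat -> (j < n)%nat -> g t i j -> g t j i) /\
  (forall t i, (i < n)%nat -> 0 <= x t i <= 1) /\
  (forall t i L R', (i < n)%nat -> is_nbr_min n g x t i L -> is_nbr_max n g x t i R' ->
     L + rho * (R' - L) <= x (S t) i <= R' - rho * (R' - L)).

(* time step t is counted in C_eps *)
Definition communicates (n : nat) (eps : R)
  (g : nat -> nat -> nat -> Prop) (x : nat -> nat -> R) (t : nat) : Prop :=
  exists i j, (i < n)%nat /\ (j < n)%nat /\ g t i j /\ Rabs (x t i - x t j) >= eps.

(* Main.v *)
Require Import Defs.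
From Stdlib Require Import Reals Lra Lia List.
From Stdlib Require Import Classical ZArith.
Open Scope R_scope.

Section Constr.
Variables (n : nat) (rho eps : R).
Hypothesis Hrho : 0 < rho.
Hypothesis Hrho3 : rho <= 1/3.
Hypothesis Heps : 0 < eps.

Definition gap (s : nat -> R) (k : nat) : R := s k - s (k-1)%nat.

Fixpoint sel_aux (s : nat -> R) (m : nat) : option nat :=
  match m with
  | O => None
  | S m' => if Rle_dec eps (gap s (S m')) then Some (S m') else sel_aux s m'
  end.

Definition sel (s : nat -> R) : option nat := sel_aux s (n-1).

Lemma sel_aux_some s m j : sel_aux s m = Some j ->
  (1 <= j <= m)%nat /\ eps <= gap s j /\ (forall j', (j < j' <= m)%nat -> gap s j' < eps).
Proof.
  revert j; induction m as [|m IH]; intros j H; simpl in H; [discriminate|].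
  destruct (Rle_dec eps (gap s (S m))) as [h|h].
  - inversion H; subst. split; [lia|]. split; [exact h|]. intros; lia.
  - destruct (IH j H) as [H1 [H2 H3]]. split; [lia|]. split; [exact H2|].
    intros j' Hj'. destruct (Nat.eq_dec j' (S m)) as [->|ne].
    + lra.
    + apply H3; lia.
Qed.

Lemma sel_aux_none s m : sel_aux s m = None -> forall j, (1 <= j <= m)%nat -> gap s j < eps.
Proof.
  induction m as [|m IH]; intros H j Hj; [lia|]. simpl in H.
  destruct (Rle_dec eps (gap s (S m))) as [h|h]; [discriminate|].
  destruct (Nat.eq_dec j (S m)) as [->|ne]; [lra|]. apply IH; auto; lia.
Qed.

Lemma sel_aux_of s m k : (1 <= k <= m)%nat -> eps <= gap s k ->
  (forall j, (k < j <= m)%nat -> gap s j < eps) -> sel_aux s m = Some k.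
Proof.
  induction m as [|m IH]; intros Hk Hg Hc; [lia|]. simpl.
  destruct (Rle_dec eps (gap s (S m))) as [h|h].
  - destruct (Nat.eq_dec k (S m)) as [->|ne]; auto.
    specialize (Hc (S m)); lra || (exfalso; assert (gap s (S m) < eps) by (apply Hc; lia); lra).
  - destruct (Nat.eq_dec k (S m)) as [->|ne]; [lra|]. apply IH; auto; [lia|]. intros; apply Hc; lia.
Qed.

Definition upd (s : nat -> R) (k : nat) (i : nat) : R :=
  if Nat.eq_dec i (k-1) then s (k-1)%nat + rho * gap s k
  else if Nat.eq_dec i k then s k - rho * gap s k else s i.

Definition step (s : nat -> R) : nat -> R :=
  match sel s with None => s | Some k => upd s k end.

Definition init (i : nat) : R := if Nat.eq_dec i 0 then 0 else 1.

Fixpoint X (t : nat) : nat -> R :=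
  match t with O => init | S t' => step (X t') end.

Ltac gsolve := unfold gap, upd; repeat (destruct Nat.eq_dec); try lia; try lra;
  repeat match goal with H : _ = _ |- _ => rewrite H in * end; try lra; try (f_equal; lia).

Lemma gap_upd_self s k : (1 <= k)%nat -> gap (upd s k) k = (1 - 2*rho) * gap s k.
Proof. intros. unfold gap, upd. repeat destruct Nat.eq_dec; try lia. unfold gap. ring. Qed.

Lemma gap_upd_next s k : (1 <= k)%nat -> gap (upd s k) (S k) = gap s (S k) + rho * gap s k.
Proof. intros. unfold gap, upd. replace (S k - 1)%nat with k by lia.
  repeat destruct Nat.eq_dec; try lia. unfold gap. ring. Qed.

Lemma gap_upd_prev s k : (2 <= k)%nat -> gap (upd s k) (k-1) = gap s (k-1) + rho * gap s k.
Proof. intros. unfold gap at 1, upd. repeat destruct Nat.eq_dec; try lia. unfold gap. ring. Qed.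

Lemma gap_upd_far s k j : (1 <= k)%nat -> (1 <= j)%nat -> j <> (k-1)%nat -> j <> k -> j <> S k ->
  gap (upd s k) j = gap s j.
Proof. intros. unfold gap, upd. repeat destruct Nat.eq_dec; try lia. reflexivity. Qed.


Lemma step_some s k : sel s = Some k -> step s = upd s k.
Proof. unfold step; intros ->; reflexivity. Qed.
Lemma step_none s : sel s = None -> step s = s.
Proof. unfold step; intros ->; reflexivity. Qed.

Lemma sel_some s k : sel s = Some k ->
  (1 <= k <= n-1)%nat /\ eps <= gap s k /\ (forall j', (k < j' <= n-1)%nat -> gap s j' < eps).
Proof. apply sel_aux_some. Qed.

Lemma inv t : (forall i, 0 <= X t i <= 1) /\ (forall j, (1 <= j)%nat -> 0 <= gap (X t) j).
Proof.
  induction t as [|t [IH1 IH2]].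
  - simpl. split.
    + intros i. unfold init. destruct Nat.eq_dec; lra.
    + intros j Hj. unfold gap, init. repeat destruct Nat.eq_dec; try lia; lra.
  - simpl. destruct (sel (X t)) as [k|] eqn:E.
    + rewrite (step_some _ _ E). destruct (sel_some _ _ E) as [Hk [Hg _]].
      assert (0 <= rho * gap (X t) k <= gap (X t) k) by nra.
      split.
      * intros i. unfold upd. pose proof (IH1 (k-1)%nat). pose proof (IH1 k). pose proof (IH1 i).
        unfold gap in *. repeat destruct Nat.eq_dec; lra.
      * intros j Hj.
        destruct (Nat.eq_dec j k) as [->|n1].
        { rewrite gap_upd_self by lia. apply Rmult_le_pos; lra. }
        destruct (Nat.eq_dec j (S k)) as [->|n2].
        { rewrite gap_upd_next by lia. pose proof (IH2 (S k) ltac:(lia)). lra. }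
        destruct (Nat.eq_dec j (k-1)) as [->|n3].
        { rewrite gap_upd_prev by lia. pose proof (IH2 (k-1)%nat ltac:(lia)). lra. }
        rewrite gap_upd_far by lia. auto.
    + rewrite (step_none _ E). split; auto.
Qed.

Definition lvl_ge (k u : nat) : Prop :=
  match sel (X u) with Some j => (k <= j)%nat | None => False end.

Lemma lvl_dec k u : {lvl_ge k u} + {~ lvl_ge k u}.
Proof. unfold lvl_ge. destruct (sel (X u)); [apply Compare_dec.le_dec | right; auto]. Qed.

Definition clear (k : nat) (s : nat -> R) : Prop :=
  forall j, (k <= j <= n-1)%nat -> gap s j < eps.

Lemma sel_of_clear s k : (1 <= k <= n-1)%nat -> clear (S k) s -> eps <= gap s k -> sel s = Some k.
Proof. intros. apply sel_aux_of; auto. Qed.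

Lemma clear_of_not_lvl k u : (1 <= k)%nat -> ~ lvl_ge k u -> clear k (X u).
Proof.
  unfold lvl_ge, clear. intros Hk H j Hj. destruct (sel (X u)) as [j0|] eqn:E.
  - destruct (sel_some _ _ E) as [_ [_ H3]]. apply H3. lia.
  - apply (sel_aux_none _ _ E). lia.
Qed.

Lemma mono k : (1 <= k)%nat -> forall m a, (forall u, (a <= u < a + m)%nat -> lvl_ge (S k) u) ->
  gap (X a) k <= gap (X (a + m)) k.
Proof.
  intros Hk. induction m as [|m IH]; intros a Hl.
  - rewrite Nat.add_0_r. lra.
  - eapply Rle_trans. apply IH. intros; apply Hl; lia.
    replace (a + S m)%nat with (S (a + m)) by lia. simpl.
    specialize (Hl (a+m)%nat ltac:(lia)). unfold lvl_ge in Hl.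
    destruct (sel (X (a+m))) as [j|] eqn:E; [|contradiction].
    rewrite (step_some _ _ E). destruct (sel_some _ _ E) as [Hj [Hg _]].
    destruct (Nat.eq_dec j (S k)) as [->|ne].
    + pose proof (gap_upd_prev (X (a+m)) (S k) ltac:(lia)) as HH.
      replace (S k - 1)%nat with k in HH by lia. rewrite HH.
      assert (0 <= rho * gap (X (a + m)) (S k)) by (apply Rmult_le_pos; lra). lra.
    + rewrite gap_upd_far by lia. lra.
Qed.

Definition isc (u : nat) : nat := match sel (X u) with Some _ => 1%nat | None => 0%nat end.

Fixpoint cnt (a m : nat) : nat :=
  match m with O => O | S m' => (isc a + cnt (S a) m')%nat end.

Lemma cnt_add m1 m2 a : cnt a (m1 + m2) = (cnt a m1 + cnt (a + m1) m2)%nat.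
Proof.
  revert a; induction m1 as [|m1 IH]; intros a; simpl.
  - rewrite Nat.add_0_r; reflexivity.
  - rewrite IH. replace (S a + m1)%nat with (a + S m1)%nat by lia. lia.
Qed.

Lemma cnt_all k m a : (forall u, (a <= u < a + m)%nat -> lvl_ge k u) -> cnt a m = m.
Proof.
  revert a; induction m as [|m IH]; intros a H; simpl; auto.
  rewrite IH by (intros; apply H; lia).
  specialize (H a ltac:(lia)). unfold isc, lvl_ge in *. destruct (sel (X a)); [lia|contradiction].
Qed.

Lemma least (P : nat -> Prop) (dec : forall u, {P u} + {~ P u}) t :
  (exists u, (t <= u)%nat /\ ~ P u) ->
  exists m, (forall u, (t <= u < t + m)%nat -> P u) /\ ~ P (t + m)%nat.
Proof.
  intros [u [Hu HP]].
  assert (G : forall r t0, (t0 + r = u)%nat -> exists m, (forall v, (t0 <= v < t0 + m)%nat -> P v) /\ ~ P (t0 + m)%nat).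
  { induction r as [|r IH]; intros t0 E.
    - exists 0%nat. rewrite Nat.add_0_r in *. subst. split; auto. intros; lia.
    - destruct (dec t0) as [p|np].
      + destruct (IH (S t0) ltac:(lia)) as [m [H1 H2]]. exists (S m). split.
        * intros v Hv. destruct (Nat.eq_dec v t0) as [->|ne]; auto. apply H1; lia.
        * replace (t0 + S m)%nat with (S t0 + m)%nat by lia. auto.
      + exists 0%nat. rewrite Nat.add_0_r. split; auto. intros; lia. }
  apply (G (u - t)%nat t). lia.
Qed.

Lemma pow_le1 x m : 0 <= x <= 1 -> x ^ m <= 1.
Proof. intros H. induction m; simpl; nra. Qed.

Lemma pow_pos' x m : 0 < x -> 0 < x ^ m.
Proof. intros; apply pow_lt; auto. Qed.


Lemma lvl_weak k u : lvl_ge (S k) u -> lvl_ge k u.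
Proof. unfold lvl_ge. destruct (sel (X u)); auto; lia. Qed.

Definition Claim (d : nat) : Prop := forall (A t : nat) (G : R),
  clear (S (n - d)) (X t) -> G <= gap (X t) (n - d) ->
  eps <= G * (1 - 2*rho) ^ (d * A) * rho ^ (d - 1) ->
  exists m, (A ^ d <= cnt t m)%nat /\ forall u, (t <= u < t + m)%nat -> lvl_ge (n - d) u.

Lemma Q d (Hd : (1 <= d <= n - 1)%nat) (sub : (2 <= d)%nat -> Claim (d - 1)) (A : nat) :
  forall i t H, clear (S (n-d)) (X t) -> H <= gap (X t) (n-d) ->
  eps <= H * (1-2*rho) ^ ((d-1)*A + i) * rho ^ (d-1) ->
  exists m, (i * A ^ (d-1) <= cnt t m)%nat /\ forall u, (t <= u < t + m)%nat -> lvl_ge (n-d) u.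
Proof.
  set (k := (n - d)%nat).
  assert (Hk : (1 <= k <= n-1)%nat) by (unfold k; lia).
  induction i as [|i IH]; intros t H Hc HH He.
  - exists 0%nat. split; [simpl; lia | intros; lia].
  - assert (Hq : 1/3 <= 1 - 2*rho <= 1) by lra.
    assert (P1: 0 < (1-2*rho)^((d-1)*A + S i)) by (apply pow_lt; lra).
    assert (P1': (1-2*rho)^((d-1)*A + S i) <= 1) by (apply pow_le1; lra).
    assert (P2: 0 < rho^(d-1)) by (apply pow_lt; lra).
    assert (P2': rho^(d-1) <= 1) by (apply pow_le1; lra).
    set (a := (1-2*rho)^((d-1)*A + S i)) in *.
    set (b := rho^(d-1)) in *.
    assert (Hab : 0 < a * b <= 1) by (split; [apply Rmult_lt_0_compat; lra | nra]).
    assert (HHpos : 0 < H).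
    { destruct (Rle_lt_dec H 0) as [h|h]; auto.
      assert (H * (a * b) <= 0) by nra. replace (H * a * b) with (H * (a*b)) in He by ring. lra. }
    assert (HHe : eps <= H).
    { replace (H * a * b) with (H * (a*b)) in He by ring. nra. }
    assert (Hsel : sel (X t) = Some k) by (apply sel_of_clear; auto; lra).
    assert (HX : X (S t) = upd (X t) k) by (simpl; apply step_some; auto).
    assert (Hg1 : (1-2*rho) * H <= gap (X (S t)) k).
    { rewrite HX, gap_upd_self by lia. apply Rmult_le_compat_l; lra. }
    assert (Hisc : isc t = 1%nat) by (unfold isc; rewrite Hsel; auto).
    assert (Hlt : lvl_ge k t) by (unfold lvl_ge; rewrite Hsel; lia).
    assert (Hcond : eps <= (1 - 2 * rho) * H * (1 - 2 * rho) ^ ((d - 1) * A + i) * rho ^ (d - 1)).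
    { unfold a, b in He. rewrite Nat.add_succ_r, <- tech_pow_Rmult in He.
      replace ((1 - 2 * rho) * H * (1 - 2 * rho) ^ ((d - 1) * A + i) * rho ^ (d - 1))
        with (H * ((1 - 2 * rho) * (1 - 2 * rho) ^ ((d - 1) * A + i)) * rho ^ (d - 1)) by ring.
      exact He. }
    destruct (Nat.eq_dec d 1) as [Ed|Ed].
    + destruct (IH (S t) ((1-2*rho)*H)) as [m [Hm Hl]].
      * intros j Hj. unfold k in Hj. lia.
      * exact Hg1.
      * exact Hcond.
      * exists (S m). split.
        -- simpl. rewrite Hisc. replace (d-1)%nat with 0%nat in * by lia.
           rewrite Nat.pow_0_r in *. lia.
        -- intros u Hu. destruct (Nat.eq_dec u t) as [->|ne]; auto. apply Hl; lia.
    + assert (Hd2 : (2 <= d)%nat) by lia.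
      pose proof (sub Hd2) as C.
      assert (Ek : (n - (d-1) = S k)%nat) by (unfold k; lia).
      destruct (C A (S t) (rho * H)) as [m1 [Hm1 Hl1]].
      * rewrite Ek. intros j Hj. rewrite HX, gap_upd_far by lia. apply Hc; lia.
      * rewrite Ek, HX, gap_upd_next by lia. pose proof (proj2 (inv t) (S k) ltac:(lia)).
        assert (rho * H <= rho * gap (X t) k) by (apply Rmult_le_compat_l; lra). lra.
      * unfold a, b in He.
        assert (Er : rho ^ (d-1) = rho * rho ^ (d-1-1)).
        { replace (d-1)%nat with (S (d-1-1)) at 1 by lia. reflexivity. }
        rewrite pow_add, Er in He.
        set (Y := rho * H * (1 - 2 * rho) ^ ((d - 1) * A) * rho ^ (d - 1 - 1)).
        set (Z := (1 - 2 * rho) ^ S i).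
        assert (0 <= Y).
        { unfold Y. repeat apply Rmult_le_pos; try lra; apply pow_le; lra. }
        assert (Z <= 1) by (apply pow_le1; lra).
        assert (0 <= Z) by (apply pow_le; lra).
        replace (H * ((1 - 2 * rho) ^ ((d - 1) * A) * (1 - 2 * rho) ^ S i) * (rho * rho ^ (d - 1 - 1)))
          with (Y * Z) in He by (unfold Y, Z; ring).
        nra.
      * rewrite Ek in Hl1.
        set (t1 := (S t + m1)%nat).
        destruct (classic (exists u, (t1 <= u)%nat /\ ~ lvl_ge (S k) u)) as [Ex|NEx].
        -- destruct (least _ (lvl_dec (S k)) t1 Ex) as [m2 [Hl2 Hn2]].
           set (t2 := (t1 + m2)%nat) in *.
           assert (Hc2 : clear (S k) (X t2)) by (apply clear_of_not_lvl; auto; lia).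
           assert (Hmono : gap (X (S t)) k <= gap (X t2) k).
           { replace t2 with (S t + (m1 + m2))%nat by (unfold t2, t1; lia). apply mono; [lia|].
             intros u Hu. destruct (Compare_dec.le_lt_dec t1 u).
             - apply Hl2; unfold t1 in *; lia.
             - apply Hl1; unfold t1 in *; lia. }
           destruct (IH t2 ((1-2*rho)*H)) as [m3 [Hm3 Hl3]].
           ++ exact Hc2.
           ++ lra.
           ++ exact Hcond.
           ++ exists (S (m1 + (m2 + m3))). split.
              ** simpl. rewrite Hisc. rewrite !cnt_add.
                 replace (S t + m1)%nat with t1 by reflexivity.
                 replace (S t + m1 + m2)%nat with t2 by (unfold t2, t1; lia).
                 change (t1 + m2)%nat with t2. lia.
              ** intros u Hu. destruct (Nat.eq_dec u t) as [->|ne]; auto.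
                 destruct (Compare_dec.le_lt_dec t1 u).
                 { destruct (Compare_dec.le_lt_dec t2 u).
                   - apply Hl3; unfold t2, t1 in *; lia.
                   - apply lvl_weak, Hl2; unfold t2, t1 in *; lia. }
                 apply lvl_weak, Hl1; unfold t1 in *; lia.
        -- assert (All : forall u, (t1 <= u)%nat -> lvl_ge (S k) u).
           { intros u Hu. apply NNPP. intros N. apply NEx. exists u; auto. }
           exists (S (m1 + S i * A ^ (d-1)))%nat. split.
           ++ simpl. rewrite Hisc, cnt_add.
              rewrite (cnt_all (S k) _ (S t + m1)%nat) by (intros; apply All; unfold t1; lia).
              lia.
           ++ intros u Hu. destruct (Nat.eq_dec u t) as [->|ne]; auto.
              apply lvl_weak. destruct (Compare_dec.le_lt_dec t1 u).
              ** apply All; auto.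
              ** apply Hl1; unfold t1 in *; lia.
Qed.

Lemma claim_all d : (1 <= d <= n - 1)%nat -> Claim d.
Proof.
  induction d as [|d IH]; intros Hd; [lia|].
  intros A t G Hc HG He.
  assert (sub : (2 <= S d)%nat -> Claim (S d - 1)).
  { intros h. replace (S d - 1)%nat with d by lia. apply IH; lia. }
  destruct (Q (S d) Hd sub A A t G Hc HG) as [m [Hm Hl]].
  - replace ((S d - 1) * A + A)%nat with (S d * A)%nat by lia. exact He.
  - exists m. split; auto. replace (S d - 1)%nat with d in Hm by lia. simpl. lia.
Qed.


Definition gr (t i j : nat) : Prop := i = j \/
  match sel (X t) with
  | Some k => (i = (k-1)%nat /\ j = k) \/ (i = k /\ j = (k-1)%nat)
  | None => False end.

Lemma avg : averaging_system n rho gr (fun t => X t).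
Proof.
  split; [|split; [|split]].
  - intros; left; auto.
  - intros t i j _ _ H. unfold gr in *. destruct H as [->|H]; [left; auto|right].
    destruct (sel (X t)); tauto.
  - intros t i _. apply (proj1 (inv t)).
  - intros t i L R' Hi [[jL [HjL [HgL HxL]]] HLall] [[jR [HjR [HgR HxR]]] HRall].
    simpl. unfold gr in *.
    destruct (sel (X t)) as [k|] eqn:E.
    + rewrite (step_some _ _ E). destruct (sel_some _ _ E) as [Hk [Hg _]].
      unfold gap in Hg.
      destruct (Nat.eq_dec i (k-1)) as [Ei|Ei].
      * assert (L1 : L <= X t k) by (apply HLall; [lia| right; left; auto]).
        assert (L2 : L <= X t (k-1)%nat) by (apply HLall; [lia| left; auto]).
        assert (R1 : X t k <= R') by (apply HRall; [lia| right; left; auto]).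
        assert (R2 : X t (k-1)%nat <= R') by (apply HRall; [lia| left; auto]).
        assert (EL : L = X t (k-1)%nat).
        { destruct HgL as [<-|[[_ ->]|[? _]]]; [rewrite <- HxL, Ei; auto| |lia]. lra. }
        assert (ER : R' = X t k).
        { destruct HgR as [<-|[[_ ->]|[? _]]]; [|auto|lia]. rewrite Ei in HxR. lra. }
        subst L R'. unfold upd, gap. rewrite Ei. destruct Nat.eq_dec; [|lia]. nra.
      * destruct (Nat.eq_dec i k) as [Ek|Ek].
        -- assert (L1 : L <= X t k) by (apply HLall; [lia| left; auto]).
           assert (L2 : L <= X t (k-1)%nat) by (apply HLall; [lia| right; right; auto]).
           assert (R1 : X t k <= R') by (apply HRall; [lia| left; auto]).
           assert (R2 : X t (k-1)%nat <= R') by (apply HRall; [lia| right; right; auto]).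
           assert (EL : L = X t (k-1)%nat).
           { destruct HgL as [<-|[[? _]|[_ ->]]]; [|lia|auto]. rewrite Ek in HxL. lra. }
           assert (ER : R' = X t k).
           { destruct HgR as [<-|[[? _]|[_ ->]]]; [rewrite <- HxR, Ek; auto|lia|]. lra. }
           subst L R'. unfold upd, gap. rewrite Ek. destruct Nat.eq_dec; [lia|].
           destruct Nat.eq_dec; [|lia]. nra.
        -- assert (jL = i) by (destruct HgL as [->|[[? _]|[? _]]]; auto; lia).
           assert (jR = i) by (destruct HgR as [->|[[? _]|[? _]]]; auto; lia).
           subst jL jR. subst L R'. unfold upd.
           destruct Nat.eq_dec; [lia|]. destruct Nat.eq_dec; [lia|]. lra.
    + rewrite (step_none _ E).
      assert (jL = i) by (destruct HgL as [->|[]]; auto).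
      assert (jR = i) by (destruct HgR as [->|[]]; auto).
      subst jL jR. subst L R'. lra.
Qed.

Lemma comm u : isc u = 1%nat -> communicates n eps gr (fun t => X t) u.
Proof.
  unfold isc. destruct (sel (X u)) as [k|] eqn:E; [|discriminate]. intros _.
  destruct (sel_some _ _ E) as [Hk [Hg _]].
  exists (k-1)%nat, k. split; [lia|]. split; [lia|]. split.
  - right. rewrite E. left; auto.
  - unfold gap in Hg. rewrite Rabs_minus_sym, Rabs_right; lra.
Qed.

Lemma len_filter a m : length (filter (fun u => Nat.eqb (isc u) 1) (seq a m)) = cnt a m.
Proof.
  revert a; induction m as [|m IH]; intros a; simpl; auto.
  assert (D : isc a = 0%nat \/ isc a = 1%nat) by (unfold isc; destruct (sel (X a)); auto).
  destruct D as [D|D]; rewrite D; simpl; rewrite IH; auto.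
Qed.

End Constr.

Lemma ln_le' x y : 0 < x -> x <= y -> ln x <= ln y.
Proof. intros Hx Hxy. destruct (Rle_lt_or_eq_dec _ _ Hxy) as [h|h].
  - left. apply ln_increasing; auto.
  - subst; lra. Qed.

Lemma ln_cancel x y : 0 < x -> 0 < y -> ln x <= ln y -> x <= y.
Proof. intros Hx Hy H. destruct (Rle_lt_dec x y) as [h|h]; auto.
  assert (ln y < ln x) by (apply ln_increasing; auto). lra. Qed.

Lemma est n rho eps : (2 <= n)%nat -> 0 < rho -> rho <= 1/3 -> 0 < eps -> eps <= rho ^ (2 * n) ->
  exists A : nat, 0 <= 1/48 / (rho * INR n) * log2 (/ eps) /\
    1/48 / (rho * INR n) * log2 (/ eps) <= INR A /\
    eps <= 1 * (1 - 2*rho) ^ ((n-1) * A) * rho ^ (n - 1 - 1).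
Proof.
  intros Hn Hr Hr3 He Hle.
  set (N := INR n).
  assert (HN : 2 <= N) by (unfold N; replace 2 with (INR 2) by (simpl; ring); apply le_INR; lia).
  set (q := 1 - 2*rho).
  assert (Hq : 1/3 <= q <= 1) by (unfold q; lra).
  set (lam := ln rho). set (lq := ln q). set (Lam := - ln eps).
  assert (Hlam : lam <= 0) by (unfold lam; rewrite <- ln_1; apply ln_le'; lra).
  assert (HLam : - Lam <= 2 * N * lam).
  { unfold Lam, lam. rewrite Ropp_involutive. eapply Rle_trans. apply ln_le'; [exact He| exact Hle].
    rewrite ln_pow by lra. rewrite mult_INR. simpl (INR 2). unfold N. lra. }
  assert (HLam0 : 0 <= Lam) by nra.
  assert (Hlqlam : lam <= lq) by (unfold lam, lq; apply ln_le'; lra).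
  assert (Hlq : - 6 * rho <= lq).
  { set (iq := / q). assert (Hqi : q * iq = 1) by (unfold iq; field; lra).
    assert (iq > 0) by (unfold iq; apply Rinv_0_lt_compat; lra).
    pose proof (exp_ineq1_le (ln iq)). rewrite exp_ln in H0 by lra.
    unfold iq in H0. rewrite ln_Rinv in H0 by lra. fold iq in H0. fold lq in H0.
    assert (iq <= 3) by nra. assert (iq - 1 = 2 * rho * iq) by (unfold q in Hqi; nra). nra. }
  assert (Hln2 : 1 / 2 < ln 2) by (unfold Rdiv; rewrite Rmult_1_l; apply ln_lt_2).
  set (B := Lam / (12 * rho * N)).
  assert (HB0 : 0 <= B) by (unfold B; apply Rmult_le_pos; [lra| left; apply Rinv_0_lt_compat; nra]).
  assert (Hbase : 1/48 / (rho * N) * log2 (/ eps) = B / (4 * ln 2)).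
  { unfold log2, B, Lam. rewrite ln_Rinv by lra. field. repeat split; lra. }
  assert (HbB : B / (4 * ln 2) <= B / 2).
  { unfold Rdiv. apply Rmult_le_compat_l; auto. apply Rinv_le_contravar; lra. }
  assert (Hb0 : 0 <= B / (4 * ln 2)) by (apply Rmult_le_pos; [lra| left; apply Rinv_0_lt_compat; lra]).
  destruct (base_Int_part B) as [I1 I2].
  set (z := Int_part B) in *.
  assert (Hz : (0 <= z)%Z) by (assert (Hm1 : IZR (-1) < IZR z) by (simpl; lra); apply lt_IZR in Hm1; lia).
  set (A0 := Z.to_nat z).
  assert (HA0 : INR A0 = IZR z) by (unfold A0; rewrite INR_IZR_INZ, Z2Nat.id; auto).
  set (A := Nat.max 1 A0).
  assert (HA1 : 1 <= INR A) by (replace 1 with (INR 1) by reflexivity; apply le_INR; unfold A; lia).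
  assert (HAA0 : INR A0 <= INR A) by (apply le_INR; unfold A; lia).
  exists A. fold N. rewrite Hbase. split; [lra|]. split; [lra|].
  rewrite Rmult_1_l.
  assert (P1 : 0 < q ^ ((n-1)*A)) by (apply pow_lt; lra).
  assert (P2 : 0 < rho ^ (n-1-1)) by (apply pow_lt; lra).
  apply ln_cancel; auto. apply Rmult_lt_0_compat; auto.
  rewrite ln_mult, !ln_pow by lra. fold lq lam.
  rewrite mult_INR. rewrite !minus_INR by lia. simpl (INR 1). fold N.
  replace (ln eps) with (- Lam) by (unfold Lam; ring).
  destruct (Nat.eq_dec A0 0) as [E0|E0].
  - assert (INR A = 1) by (unfold A; rewrite E0; reflexivity). rewrite H.
    assert ((N - 1) * 1 * lq >= (N-1) * lam) by nra.
    nra.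
  - assert (EA : A = A0) by (unfold A; lia). rewrite EA.
    assert (HA0B : INR A0 <= B) by lra.
    assert (INR A0 >= 0) by (apply Rle_ge, pos_INR).
    assert (T1 : (N - 1) * INR A0 * lq >= (N - 1) * INR A0 * (- 6 * rho)).
    { apply Rle_ge. apply Rmult_le_compat_l; [nra | lra]. }
    assert (T2a : (N - 1) * INR A0 <= N * B) by nra.
    assert (T2 : (N - 1) * INR A0 * (- 6 * rho) >= - (6 * rho * N * B)).
    { assert (6 * rho * ((N - 1) * INR A0) <= 6 * rho * (N * B)) by (apply Rmult_le_compat_l; lra). nra. }
    assert (T3 : 6 * rho * N * B = Lam / 2) by (unfold B; field; lra).
    nra.
Qed.

Theorem mainTheorem8 :
  exists c : R, 0 < c /\
  forall (n : nat) (rho eps : R),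
    (2 <= n)%nat -> 0 < rho -> rho <= 1/3 -> 0 < eps -> eps <= rho ^ (2 * n) ->
    exists (g : nat -> nat -> nat -> Prop) (x : nat -> nat -> R),
      averaging_system n rho g x /\
      exists T : list nat,
        NoDup T /\ (forall t, In t T -> communicates n eps g x t) /\
        (c / (rho * INR n) * log2 (/ eps)) ^ (n - 1) <= INR (length T).
Proof.
  exists (1/48). split; [lra|].
  intros n rho eps Hn Hr Hr3 He Hle.
  destruct (est n rho eps Hn Hr Hr3 He Hle) as [A [H0 [H1 H2]]].
  assert (HC : Claim n rho eps (n-1)) by (apply claim_all; auto; lia).
  destruct (HC A 0%nat 1) as [m [Hm _]].
  - replace (S (n - (n-1))) with 2%nat by lia. intros j Hj. unfold gap. simpl. unfold init.
    repeat destruct Nat.eq_dec; try lia; lra.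
  - replace (n - (n-1))%nat with 1%nat by lia. unfold gap. simpl. unfold init.
    repeat destruct Nat.eq_dec; try lia; lra.
  - exact H2.
  - exists (gr n rho eps), (fun t => X n rho eps t). split.
    + apply avg; auto.
    + exists (filter (fun u => Nat.eqb (isc n rho eps u) 1) (seq 0 m)). split; [|split].
      * apply NoDup_filter, seq_NoDup.
      * intros t Ht. apply filter_In in Ht. destruct Ht as [_ Ht].
        apply Nat.eqb_eq in Ht. apply comm; auto.
      * rewrite len_filter. eapply Rle_trans.
        -- apply pow_incr. split; [exact H0 | exact H1].
        -- rewrite <- pow_INR. apply le_INR. exact Hm.
Qed.
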